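(* There exist a $\{0,1\}$-valued sequence $(X_i)_{i\ge1}$ on a probability space, with $\mathcal{F}_n=\sigma(X_1,\dots,X_n)$, and a $[0,1]$-valued bounded $\mathcal{F}_n$-martingale $(\theta_n)_{n\ge0}$ that does not arise as the posterior mean $\mathbb{E}[\theta\mid\mathcal{F}_n]$ under any exchangeable Bernoulli law; that is, there is no exchangeable law on $\{0,1\}^{\mathbb{N}}$ with directing parameter $\theta$ for which $\theta_n=\mathbb{E}[\theta\mid X_1,\dots,X_n]$ (as a function of $X_1,\dots,X_n$) for all $n$.
   Context: An exchangeable Bernoulli law is the law of a $\{0,1\}$-valued sequence whose finite-dimensional distributions are invariant under permutations; by de Finetti's theorem it has a directing random variable $\theta\in[0,1]$ such that conditionally on $\theta$ the coordinates are i.i.d. $\mathrm{Bernoulli}(\theta)$. *)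

(* Defs.v *)
From HB Require Import structures.
From mathcomp Require Import all_boot all_order all_algebra.
From mathcomp Require Import all_classical all_reals all_analysis.
Set Implicit Arguments. Unset Strict Implicit. Unset Printing Implicit Defensive.
Import Order.TTheory GRing.Theory Num.Theory.
Local Open Scope classical_set_scope.
Local Open Scope ring_scope.

(* obs_prefix X n w = (X_1 w, ..., X_n w); in Rocq the sequence is indexed from 0,
   so X 0 plays the role of X_1. *)
Definition obs_prefix (T : Type) (X : nat -> T -> bool) (n : nat) (w : T)
  : n.-tuple bool := [tuple X i w | i < n].

Definition bool_process d (T : measurableType d) (X : nat -> T -> bool) :=
  forall i b, measurable [set w | X i w = b].

(* (th n) is an (F_n)-martingale, F_n = sigma(X_1,...,X_n).  The events of
   F_n are exactly the sets  obs_prefix X n @^-1` B,  B a subset of {0,1}^n. *)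
Definition bin_martingale d (T : measurableType d) (R : realType)
  (P : probability T R) (X : nat -> T -> bool) (th : nat -> T -> R) :=
  (forall n, exists g : n.-tuple bool -> R,
      forall w, th n w = g (obs_prefix X n w)) /\
  (forall n, P.-integrable setT (fun w => (th n w)%:E)) /\
  (forall n (B : set (n.-tuple bool)),
      (\int[P]_(w in obs_prefix X n @^-1` B) (th n.+1 w)%:E =
       \int[P]_(w in obs_prefix X n @^-1` B) (th n w)%:E)%E).

(* Exchangeable Bernoulli law with directing random variable Th: the
   sequence Y is, conditionally on Th (a [0,1]-valued random variable),
   i.i.d. *)
Definition exch_bernoulli d (T : measurableType d) (R : realType)
  (Q : probability T R) (Y : nat -> T -> bool) (Th : T -> R) :=
  bool_process Y /\ measurable_fun setT Th /\ (forall w, 0 <= Th w <= 1) /\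
  forall n (x : n.-tuple bool) (B : set R), measurable B ->
    Q (obs_prefix Y n @^-1` [set x] `&` Th @^-1` B) =
    (\int[Q]_(w in Th @^-1` B)
        (\prod_(i < n) (if tnth x i then Th w else 1 - Th w))%:E)%E.

(* g n is (a version of) the posterior mean E_Q[Th | Y_1..Y_n] as a function
   of (Y_1..Y_n): on every atom {Y_1..Y_n = x} of positive probability,
   E_Q[Th ; Y_1..Y_n = x] = g n x * Q(Y_1..Y_n = x). *)
Definition posterior_mean d (T : measurableType d) (R : realType)
  (Q : probability T R) (Y : nat -> T -> bool) (Th : T -> R)
  (g : forall n, n.-tuple bool -> R) :=
  forall n (x : n.-tuple bool), (0 < Q (obs_prefix Y n @^-1` [set x]))%E ->
    (\int[Q]_(w in obs_prefix Y n @^-1` [set x]) (Th w)%:E =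
     (g n x)%:E * Q (obs_prefix Y n @^-1` [set x]))%E.

(* Main.v *)
Require Import Defs.
From HB Require Import structures.
From mathcomp Require Import all_boot all_order all_algebra.
From mathcomp Require Import all_classical all_reals all_analysis.
From mathcomp Require Import ring lra.
From mathcomp Require Import measurable_realfun.
Import Order.TTheory GRing.Theory Num.Theory.
Local Open Scope classical_set_scope.
Local Open Scope ring_scope.

Section Model.
Variable R : realType.

Definition Xm : nat -> bool -> bool := fun _ w => w.
Definition thm : nat -> bool -> R :=
  fun n w => if n is 0 then 2^-1 else (if w then 0 else 1).

Lemma thm01 n w : 0 <= thm n w <= 1.
Proof.
case: n => [|n] /=; first by rewrite invr_ge0 ler0n /= invf_le1 // ler1n.
by case: w => //=; rewrite lexx ler01.
Qed.

Lemma thm_ge0 n w : 0 <= thm n w.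
Proof. by case/andP: (thm01 n w). Qed.

Lemma meas_bool (d2 : measure_display) (U : sigmaRingType d2) (D : set bool) (f : bool -> U) : measurable_fun D f.
Proof. by move=> _ Y _; exact: I. Qed.

Lemma p01 : 0 <= (2^-1 : R) <= 1.
Proof. by rewrite invr_ge0 ler0n /= invf_le1 // ler1n. Qed.

Lemma int_bool (S : set bool) (f : bool -> R) : (forall w, 0 <= f w) ->
  (\int[bernoulli_prob (2^-1 : R)]_(w in S) (f w)%:E =
   (2^-1)%:E * ((fun w => (f w)%:E) \_ S) true + (2^-1)%:E * ((fun w => (f w)%:E) \_ S) false)%E.
Proof.
move=> f0; rewrite integral_mkcond integral_bernoulli_prob; last first.
  by move=> x; rewrite /patch; case: ifP => //; rewrite lee_fin.
  exact: p01.
have -> : (unstable.onem (2^-1 : R)) = 2^-1.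
  by rewrite /unstable.onem; field.
by rewrite /patch; case: ifP; case: ifP.
Qed.

End Model.

Theorem proposition3p8 (R : realType) :
  exists (d : measure_display) (T : measurableType d) (P : probability T R)
         (X : nat -> T -> bool) (th : nat -> T -> R),
    bool_process X /\
    (forall n w, 0 <= th n w <= 1) /\
    bin_martingale P X th /\
    forall g : forall n, n.-tuple bool -> R,
      (forall n w, th n w = g n (obs_prefix X n w)) ->
      forall (d' : measure_display) (T' : measurableType d')
             (Q : probability T' R) (Y : nat -> T' -> bool) (Th : T' -> R),
        exch_bernoulli Q Y Th -> ~ posterior_mean Q Y Th g.
Proof.
exists _, bool, (bernoulli_prob (2^-1 : R)), Xm, (@thm R).
split; first by move=> i b; exact: I.
split; first exact: thm01.
split.
  split.
    move=> n; exists (fun t : n.-tuple bool =>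
      if n is 0 then 2^-1 else (if nth false t 0 then 0 else 1)).
    move=> w; case: n => [//|n] /=.
    by rewrite -(tnth_nth false (obs_prefix Xm n.+1 w) ord0) tnth_mktuple.
  split.
    move=> n; apply/integrableP; split; first exact: meas_bool.
    apply: (@le_lt_trans _ _ (\int[bernoulli_prob (2^-1 : R)]_(x in setT) (cst 1%E x))%E).
      apply: ge0_le_integral => //; try exact: meas_bool.
      move=> x _; rewrite /= lee_fin ger0_norm; by case/andP: (thm01 R n x).
    by rewrite integral_cst //= mul1e probability_setT ltry.
  move=> [|n] B; last by [].
  have HS : forall w, (w \in obs_prefix Xm 0 @^-1` B) = (true \in obs_prefix Xm 0 @^-1` B).
    move=> w; have E : forall v, obs_prefix Xm 0 v = [tuple] by move=> v; exact: tuple0.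
    by case: (pselect (B [tuple])) => H; [rewrite !mem_set /preimage /= ?E | rewrite !memNset /preimage /= ?E].
  rewrite !int_bool; try exact: thm_ge0.
  rewrite /patch (HS false); case: (true \in _) => /=; last by rewrite !mule0 adde0.
  rewrite -!EFinM -!EFinD; congr EFin; field=> //.
move=> g Hg d' T' Q Y Th [HY [mTh [Th01 Hex]]] Hpost.
pose x0 := obs_prefix Xm 0 true.
pose x1 := obs_prefix Xm 1 true.
have g0 : g 0 x0 = 2^-1 by rewrite -Hg.
have g1 : g 1 x1 = 0 by rewrite -Hg.
have A0T : obs_prefix Y 0 @^-1` [set x0] = setT.
  apply/seteqP; split => w //= _.
  by rewrite (tuple0 (obs_prefix Y 0 w)) (tuple0 x0).
have IT : (\int[Q]_(w in setT) (Th w)%:E = (2^-1)%:E)%E.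
  have := Hpost 0 x0; rewrite A0T probability_setT g0 mule1; apply; exact: lte01.
have A1E : obs_prefix Y 1 @^-1` [set x1] = [set w | Y 0 w = true].
  apply/seteqP; split => w /=.
  - by move=> /(congr1 (fun t => tnth t ord0)); rewrite !tnth_mktuple.
  - by move=> H; apply: eq_from_tnth => i; rewrite (ord1 i) !tnth_mktuple.
have mA1 : measurable (obs_prefix Y 1 @^-1` [set x1]) by rewrite A1E; exact: HY.
have mpre : forall B, measurable B -> measurable (Th @^-1` B).
  by move=> B mB; rewrite -[X in measurable X]setTI; exact: mTh.
have mThE := proj2 (measurable_EFinP setT Th) mTh.
have Th0 : forall w, (0 <= (Th w)%:E)%E by move=> w; rewrite lee_fin; case/andP: (Th01 w).
have E1 : forall B, measurable B ->
    Q (obs_prefix Y 1 @^-1` [set x1] `&` Th @^-1` B) =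
    (\int[Q]_(w in Th @^-1` B) (Th w)%:E)%E.
  move=> B mB; rewrite Hex //; apply: eq_integral => w _.
  by rewrite big_ord1 /x1 tnth_mktuple.
have QA1 : Q (obs_prefix Y 1 @^-1` [set x1]) = (2^-1)%:E.
  by have := E1 setT measurableT; rewrite preimage_setT setIT => ->.
have intA1 : (\int[Q]_(w in obs_prefix Y 1 @^-1` [set x1]) (Th w)%:E = 0)%E.
  by have := Hpost 1 x1; rewrite QA1 g1 mul0e; apply; rewrite lte_fin.
pose L := Th @^-1` `]-oo, (4^-1 : R)].
pose U := Th @^-1` `](4^-1 : R), +oo[.
have mL : measurable L by apply: mpre; exact: measurable_itv.
have mU : measurable U by apply: mpre; exact: measurable_itv.
have QL : (Q (obs_prefix Y 1 @^-1` [set x1] `&` L) <= (4^-1)%:E)%E.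
  rewrite E1; last exact: measurable_itv.
  apply: (@le_trans _ _ (\int[Q]_(w in L) (cst (4^-1 : R)%:E w))%E).
    apply: ge0_le_integral => //; first exact: measurable_funTS.
  rewrite (integral_cst _ mL) -[X in (_ <= X)%E]mule1.
  by apply: lee_wpmul2l; [rewrite lee_fin | exact: probability_le1].
have cover : obs_prefix Y 1 @^-1` [set x1] =
    (obs_prefix Y 1 @^-1` [set x1] `&` L) `|` (obs_prefix Y 1 @^-1` [set x1] `&` U).
  rewrite -setIUr; apply/seteqP; split => w /=; last by case.
  move=> H; split => //; rewrite /L /U /= !in_itv /=.
  by case: (leP (Th w) 4^-1) => h; [left|right].
have mA1U : measurable (obs_prefix Y 1 @^-1` [set x1] `&` U) by exact: measurableI.
have QU : ((4^-1)%:E <= Q (obs_prefix Y 1 @^-1` [set x1] `&` U))%E.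
  have : (Q (obs_prefix Y 1 @^-1` [set x1]) <= Q (obs_prefix Y 1 @^-1` [set x1] `&` L) +
     Q (obs_prefix Y 1 @^-1` [set x1] `&` U))%E.
    rewrite {1}cover; exact: measureU2 (measurableI _ _ mA1 mL) mA1U.
  rewrite QA1.
  have Eq : Q (obs_prefix Y 1 @^-1` [set x1] `&` U) = (fine (Q (obs_prefix Y 1 @^-1` [set x1] `&` U)))%:E.
    by rewrite fineK //; exact: fin_num_measure.
  have El : Q (obs_prefix Y 1 @^-1` [set x1] `&` L) = (fine (Q (obs_prefix Y 1 @^-1` [set x1] `&` L)))%:E.
    by rewrite fineK //; apply: fin_num_measure; exact: measurableI.
  move: QL; rewrite Eq El -EFinD !lee_fin => Hl H; lra.
have : (0 < \int[Q]_(w in obs_prefix Y 1 @^-1` [set x1]) (Th w)%:E)%E.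
  apply: (@lt_le_trans _ _ (\int[Q]_(w in obs_prefix Y 1 @^-1` [set x1] `&` U) (cst (4^-1 : R)%:E w))%E).
    rewrite (integral_cst _ mA1U).
    apply: (@lt_le_trans _ _ ((4^-1)%:E * (4^-1)%:E)%E).
      by rewrite -EFinM lte_fin mulr_gt0 // invr_gt0.
    by apply: lee_wpmul2l; [rewrite lee_fin invr_ge0 | exact: QU].
  apply: (@le_trans _ _ (\int[Q]_(w in obs_prefix Y 1 @^-1` [set x1] `&` U) (Th w)%:E)%E).
    apply: ge0_le_integral => //.
      by move=> w _; rewrite lee_fin invr_ge0.
      exact: measurable_funTS.
    move=> w [_]; rewrite /U /= in_itv /= andbT lee_fin => h; exact: ltW.
  apply: (ge0_subset_integral _ mA1U mA1); first exact: measurable_funTS.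
    by move=> w _; exact: Th0.
  exact: subIsetl.
by rewrite intA1 ltxx.
Qed.
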